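(* Every nontrivial shadow has at least two distinct (necessarily edge-disjoint) straight-ahead cycles.
   Context: A shadow is either the trivial shadow (a vertexless simple closed curve in the plane) or the $4$-regular plane graph (loops and multiple edges allowed) obtained from a regular knot diagram by turning each crossing into a vertex; a nontrivial shadow is one with at least one vertex. At each vertex of a shadow the four edge-ends come in two opposite pairs (the two strands passing straight through the crossing). A walk is straight-ahead if, whenever it arrives at a vertex $v$ along an edge-end, it leaves $v$ along the opposite edge-end. A cycle of a graph is a connected subgraph all of whose vertices have degree $2$ in it (a vertexless closed curve also counts as a cycle). A cycle $C$ of a shadow $S$ is a straight-ahead cycle if there is a straight-ahead closed walk traversing each edge of $C$ exactly once. *)

(* Defs.v *)
(* Shadows are encoded as combinatorial maps (rotation systems). *)
From mathcomp Require Import all_boot all_fingroup.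
Set Implicit Arguments. Unset Strict Implicit. Unset Printing Implicit Defensive.

Section Shadow.
Variables (D : finType) (alpha sigma : {perm D}).
(* D     : darts = edge-ends (half-edges) of the graph;
   alpha : pairs the two ends of each edge (edges = alpha-orbits);
   sigma : rotation (cyclic order of edge-ends around each vertex in the
           plane embedding); vertices = sigma-orbits.
   At a vertex of degree 4 the edge-end opposite to d is sigma (sigma d). *)

Definition same_vertex (x y : D) : bool := fconnect sigma x y.

(* straight-ahead successor: arriving along edge-end d, leave along the
   opposite edge-end sigma (sigma d), and arrive at the other end of that edge *)
Definition sa_step (d : D) : D := alpha (sigma (sigma d)).

Definition face_step (d : D) : D := sigma (alpha d).

Definition nb_vertices := fcard sigma D.
Definition nb_edges := fcard alpha D.
Definition nb_faces := fcard face_step D.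

(* (D, alpha, sigma) is the shadow of a (one-component) regular knot diagram:
   a 4-regular graph embedded in the sphere/plane (genus 0 via Euler's formula
   for the connected map), whose straight-ahead traversal is a single closed
   curve (exactly two straight-ahead dart orbits: the two directions). *)
Definition is_shadow : Prop :=
  [/\ forall x, alpha (alpha x) = x /\ alpha x != x,
      forall x, fingraph.order sigma x = 4,
      forall x y, connect (fun a b => (b == alpha a) || (b == sigma a)) x y,
      (nb_vertices + nb_faces = nb_edges + 2)%N
    & fcard sa_step D = 2].

Definition nontrivial_shadow : Prop := (0 < #|D|)%N.

(* A set of darts C closed under alpha encodes a set of edges. *)
Definition edge_set (C : {set D}) : Prop := forall x, (alpha x \in C) = (x \in C).

(* C is a cycle: a nonempty connected subgraph in which every vertex has
   degree 2 (degree = number of edge-ends of C at the vertex, so a loop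
   counts twice). *)
Definition is_cycle (C : {set D}) : Prop :=
  [/\ edge_set C, C != set0,
      forall y, y \in C -> #|[set z in C | same_vertex y z]| = 2
    & forall x y, x \in C -> y \in C ->
        connect (fun a b => [&& a \in C, b \in C &
                               (b == alpha a) || same_vertex a b]) x y].

(* A closed straight-ahead walk, given as the nonempty list s of departure
   edge-ends of its successive edge traversals (traversal i goes from s_i to
   alpha s_i).  Straight-ahead: each intermediate arrival continues through
   the opposite edge-end; closed: the final arrival vertex is the starting
   vertex. *)
Definition sa_closed_walk (s : seq D) : Prop :=
  match s with
  | [::] => False
  | d0 :: s' =>
      path (fun d d' => d' == sigma (sigma (alpha d))) d0 s' /\
      same_vertex (alpha (last d0 s')) d0
  end.

Definition traverses_once (s : seq D) (C : {set D}) : Prop :=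
  all (fun d => d \in C) s /\
  forall x, x \in C -> count (fun d => (d == x) || (d == alpha x)) s = 1.

Definition straight_ahead_cycle (C : {set D}) : Prop :=
  is_cycle C /\ exists s, sa_closed_walk s /\ traverses_once s C.

End Shadow.

(* Main.v *)
Require Import Defs.
From mathcomp Require Import all_boot all_fingroup.
From Stdlib Require Import Classical Lia.
From mathcomp Require Import zify.
Set Implicit Arguments. Unset Strict Implicit. Unset Printing Implicit Defensive.

Section Proof.
Variables (D : finType) (alpha sigma : {perm D}).
Hypothesis Hs : is_shadow alpha sigma.

Local Notation f := (sa_step alpha sigma).
Local Notation sv := (same_vertex sigma).

Lemma aK x : alpha (alpha x) = x.
Proof. by case: Hs => H _ _ _ _; case: (H x). Qed.

Lemma a_neq x : alpha x != x.
Proof. by case: Hs => H _ _ _ _; case: (H x). Qed.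

Lemma ord4 x : fingraph.order sigma x = 4.
Proof. by case: Hs. Qed.

Lemma s4 x : sigma (sigma (sigma (sigma x))) = x.
Proof. by have := iter_order (@perm_inj _ sigma) x; rewrite ord4. Qed.

Lemma s_iter_neq i x : 0 < i < 4 -> iter i sigma x != x.
Proof.
move=> /andP[i0 i4]; apply/eqP => E.
have := findex_iter (f := sigma) (x := x) (i := i); rewrite ord4 E findex0 => /(_ i4) E2.
by rewrite -E2 in i0.
Qed.

Lemma s2_neq x : sigma (sigma x) != x.
Proof. by apply: (s_iter_neq (i:=2)). Qed.
Lemma s1_neq x : sigma x != x.
Proof. by apply: (s_iter_neq (i:=1)). Qed.
Lemma s3_neq x : sigma (sigma (sigma x)) != x.
Proof. by apply: (s_iter_neq (i:=3)). Qed.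

Lemma f_inj : injective f.
Proof. by move=> a b; rewrite /sa_step => /perm_inj /perm_inj /perm_inj. Qed.

Lemma fE x : f x = alpha (sigma (sigma x)).
Proof. by []. Qed.

Lemma afE x : alpha (f x) = sigma (sigma x).
Proof. by rewrite fE aK. Qed.

Lemma svC a b : sv a b = sv b a.
Proof. exact: (fconnect_sym (@perm_inj _ sigma)). Qed.

Lemma sv_trans a b c : sv a b -> sv b c -> sv a c.
Proof. exact: connect_trans. Qed.

Lemma sv_refl a : sv a a.
Proof. exact: connect0. Qed.

Lemma sv2 a : sv a (sigma (sigma a)).
Proof. exact: (fconnect_iter _ 2). Qed.

Lemma noalpha j y : alpha y != iter j f y.
Proof.
case: (ubnP j) => n; elim: n j y => // n IH [|[|j]] y ltj.
- exact: a_neq.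
- apply/eqP => /= E; move: E; rewrite fE => /perm_inj E.
  by move: (s2_neq y); rewrite -E eqxx.
- apply/negP => /eqP E.
  have E2 : alpha (f y) = iter j f (f y).
    apply: f_inj; rewrite -iterSr -iterS -E afE fE s4 //.
  have ljn : j < n by rewrite -ltnS (ltnW ltj).
  by move: (IH j (f y) ljn); rewrite E2 eqxx.
Qed.

Lemma NA y z : fconnect f y z -> fconnect f y (alpha z) -> False.
Proof.
move=> H1 H2.
have H3 : fconnect f z (alpha z).
  by apply: connect_trans H2; rewrite (fconnect_sym f_inj).
by move: (noalpha (findex f z (alpha z)) z); rewrite (iter_findex H3) eqxx.
Qed.

Lemma NA2 i j y : alpha (iter i f y) != iter j f y.
Proof.
apply/eqP => E; apply: (@NA y (iter i f y)); first exact: fconnect_iter.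
by rewrite E; apply: fconnect_iter.
Qed.

Lemma two_orbits x z : fconnect f x z \/ fconnect f (alpha x) z.
Proof.
case: (boolP (fconnect f x z)) => [|H1]; first by left.
case: (boolP (fconnect f (alpha x) z)) => [|H2]; first by right.
exfalso.
have sym : connect_sym (frel f) by move=> a b; apply: (fconnect_sym f_inj).
have H3 : ~~ fconnect f x (alpha x).
  by apply/negP => H; apply: (@NA x x) => //; apply: connect0.
case: Hs => _ _ _ _; rewrite /n_comp_mem => Hc.
have U : uniq [:: froot f x; froot f (alpha x); froot f z].
  by rewrite /= !inE !(root_connect sym) negb_or H1 H2 H3.
have : 3 <= #|predI (froots f) (mem D)|.
  move/card_uniqP: U => /= <-; apply: subset_leq_card.
  by apply/subsetP => r; rewrite !inE => /or3P[] /eqP ->; rewrite /= roots_root.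
by rewrite Hc.
Qed.

Definition closedw x k := sv (iter k f x) x.
Definition distw x k := forall i j, i < k -> j < k ->
  sv (iter i.+1 f x) (iter j.+1 f x) -> i = j.

Lemma seg k : forall x, 0 < k -> closedw x k -> exists a k',
  [/\ a + k' <= k, 0 < k', closedw (iter a f x) k' & distw (iter a f x) k'].
Proof.
case: (ubnP k) => n; elim: n k => // n IH k ltk x k0 cl.
case: (classic (exists i j, [/\ i < j, j < k & sv (iter i.+1 f x) (iter j.+1 f x)])).
- move=> [i [j [lij ljk sij]]].
  have lt : j - i < n by lia.
  have j0 : 0 < j - i by lia.
  have cl2 : closedw (iter i.+1 f x) (j - i).
    rewrite /closedw -iterD svC.
    by have -> : j - i + i.+1 = j.+1 by lia.
  have [a [k' [h1 h2 h3 h4]]] := IH (j - i) lt (iter i.+1 f x) j0 cl2.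
  exists (a + i.+1), k'; rewrite -!iterD in h3 h4; split => //.
  lia.
- move=> Hn; exists 0, k; split => //.
  move=> i j li lj sij.
  case: (ltngtP i j) => // [lij|lji]; exfalso; apply: Hn.
  + by exists i, j.
  + by exists j, i; rewrite svC.
Qed.
Definition Tw x k := traject f (f x) k.
Definition Cw x k : {set D} := [set y | (y \in Tw x k) || (alpha y \in Tw x k)].

Lemma memT x k y : reflect (exists2 i, i < k & y = iter i.+1 f x) (y \in Tw x k).
Proof.
rewrite /Tw; apply: (iffP trajectP) => -[i li ->]; exists i => //;
  by rewrite iterSr.
Qed.

Lemma uniq_traj n : forall y, (forall i j, i < n -> j < n -> iter i f y = iter j f y -> i = j) ->
  uniq (traject f y n).
Proof.
elim: n => [|n IHn] y H //=.
apply/andP; split.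
- apply/negP => /trajectP [i li E].
  by have := H 0 i.+1 isT li; rewrite iterSr -E => /(_ erefl).
- apply: IHn => i j li lj E.
  by have := H i.+1 j.+1 li lj; rewrite !iterSr => /(_ E) [].
Qed.

Section Cyc.
Variables (x : D) (k : nat).
Hypotheses (k0 : 0 < k) (cl : closedw x k) (ds : distw x k).

Lemma D1 i j : 0 < i <= k -> 0 < j <= k -> sv (iter i f x) (iter j f x) -> i = j.
Proof.
case: i => // i; case: j => // j /= li lj H.
by rewrite (ds li lj H).
Qed.

Lemma Dtail i p : i < k -> 0 < p <= k -> sv (iter p f x) (iter i f x) ->
  (i = 0 /\ p = k) \/ (0 < i /\ i = p).
Proof.
case: i => [|i] li lp H.
- left; split => //; apply: D1 => //; first by rewrite k0 leqnn.
  by apply: sv_trans H _; rewrite svC.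
- right; split => //; apply: D1 => //; last by rewrite svC.
  by rewrite /= ltnW.
Qed.

Lemma memC1 i : i < k -> iter i.+1 f x \in Cw x k.
Proof. by move=> li; rewrite inE; apply/orP; left; apply/memT; exists i. Qed.

Lemma memC2 i : i < k -> alpha (iter i.+1 f x) \in Cw x k.
Proof. by move=> li; rewrite inE aK; apply/orP; right; apply/memT; exists i. Qed.

Lemma uT : uniq (Tw x k).
Proof.
apply: uniq_traj => i j li lj E; apply: ds => //.
by rewrite !iterSr E sv_refl.
Qed.

Lemma iterS_a i : alpha (iter i.+1 f x) = sigma (sigma (iter i f x)).
Proof. by rewrite iterS afE. Qed.

Lemma svE a b c : sv a b -> sv a c = sv b c.
Proof.
move=> H; apply/idP/idP => H2; first by apply: sv_trans H2; rewrite svC.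
exact: sv_trans H H2.
Qed.

Lemma degree y : y \in Cw x k -> #|[set z in Cw x k | sv y z]| = 2.
Proof.
move=> yC.
have [p /andP[p0 pk] syp] : exists2 p, 0 < p <= k & sv y (iter p f x).
  move: yC; rewrite inE => /orP[/memT [i li ->]|/memT [i li E]].
    by exists i.+1; rewrite // sv_refl.
  have Ey : y = sigma (sigma (iter i f x)) by rewrite -iterS_a -E aK.
  have sy : sv y (iter i f x) by rewrite Ey svC sv2.
  case: i li E Ey sy => [|i] li E Ey sy.
    by exists k; rewrite ?k0 ?leqnn //; apply: sv_trans sy _; rewrite svC.
  by exists i.+1 => //; apply: ltnW.
set q := if p == k then 0 else p.
have qk : q < k by rewrite /q; case: eqP => [_|/eqP ne]; rewrite // ltn_neqAle ne pk.
have svq : sv (iter p f x) (iter q f x).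
  by rewrite /q; case: eqP => [->|_]; rewrite ?cl ?sv_refl.
have -> : [set z in Cw x k | sv y z] = [set iter p f x; alpha (iter q.+1 f x)].
  apply/setP => z; rewrite !inE (svE _ syp).
  apply/idP/idP.
  - case/andP => /orP[/memT [i li ->]|/memT [i li E]] sz.
      by rewrite (D1 (i := p) _ _ sz) ?p0 ?pk ?eqxx // ltnW.
    have Ez : z = sigma (sigma (iter i f x)) by rewrite -iterS_a -E aK.
    have sz2 : sv (iter p f x) (iter i f x).
      by apply: sv_trans sz _; rewrite Ez svC sv2.
    apply/orP; right; rewrite Ez -iterS_a.
    have pp : 0 < p <= k by rewrite p0 pk.
    case: (Dtail li pp sz2) => [[-> pk2]|[i0 ip]].
      by rewrite /q pk2 eqxx.
    move: li; rewrite ip /q; case: (eqVneq p k) => [->|_]; first by rewrite ltnn.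
    by rewrite eqxx.
  - case/orP => /eqP ->; apply/andP; split.
    + by have := memC1 (i := p.-1); rewrite prednK // inE; apply.
    + exact: sv_refl.
    + by have := memC2 qk; rewrite inE.
    + by rewrite iterS_a; apply: sv_trans svq _; apply: sv2.
rewrite cards2; suff -> : iter p f x != alpha (iter q.+1 f x) by [].
by apply/negP => /eqP E; move: (NA2 q.+1 p x); rewrite E eqxx.
Qed.

Definition Rc a b := [&& a \in Cw x k, b \in Cw x k & (b == alpha a) || sv a b].

Lemma Rc_sym : symmetric Rc.
Proof.
move=> a b; rewrite /Rc andbCA; congr (_ && (_ && _)).
congr (_ || _); last by rewrite svC.
by apply/eqP/eqP => ->; rewrite aK.
Qed.

Lemma conn y z : y \in Cw x k -> z \in Cw x k -> connect Rc y z.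
Proof.
have cs := sym_connect_sym Rc_sym.
have key : forall i, i < k -> connect Rc (f x) (iter i.+1 f x) /\
                           connect Rc (f x) (alpha (iter i.+1 f x)).
  elim => [|i IH] li.
    split; first exact: connect0.
    by apply: connect1; rewrite /Rc (memC1 k0) (memC2 k0) eqxx.
  have [H1 _] := IH (ltnW li).
  have H2 : connect Rc (f x) (alpha (iter i.+2 f x)).
    apply: connect_trans H1 (connect1 _).
    by rewrite /Rc memC1 ?memC2 ?(ltnW li) // iterS_a sv2 orbT.
  split => //; apply: connect_trans H2 (connect1 _).
  by rewrite /Rc memC2 ?memC1 // aK eqxx.
have toC : forall w, w \in Cw x k -> connect Rc (f x) w.
  move=> w; rewrite inE => /orP[/memT [i li ->]|/memT [i li E]].
    by case: (key i li).
  by rewrite -(aK w) E; case: (key i li).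
move=> yC zC; apply: connect_trans (toC z zC).
by rewrite cs; apply: toC.
Qed.

Lemma walk_path n : forall y, path (fun d d' => d' == sigma (sigma (alpha d))) (alpha y)
   (map alpha (traject f (f y) n)).
Proof.
elim: n => [|n IH] y //=.
by rewrite IH aK afE eqxx.
Qed.

Lemma cycle_ok : straight_ahead_cycle alpha sigma (Cw x k).
Proof.
split; first split.
- by move=> y; rewrite !inE aK orbC.
- by apply/set0Pn; exists (iter 1 f x); apply: memC1.
- exact: degree.
- exact: conn.
exists (map alpha (Tw x k)); split.
- case: k k0 cl ds => // k' _ cl' _; rewrite /Tw /=; split; first exact: walk_path.
  rewrite last_map last_traject aK -iterSr.
  by rewrite afE; apply: sv_trans cl' (sv2 x).
- split.
  + by rewrite all_map; apply/allP => t tT; rewrite /= inE aK tT orbT.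
  + move=> z zC; rewrite count_map.
    rewrite (eq_count (a2 := predU (pred1 (alpha z)) (pred1 z))); last first.
      move=> t; have e1 : (alpha t == z) = (t == alpha z) by apply/eqP/eqP => [<-|->]; rewrite aK.
      by rewrite /= e1 (inj_eq (@perm_inj _ alpha)).
    have := count_predUI (pred1 (alpha z)) (pred1 z) (Tw x k).
    rewrite (eq_count (a1 := predI _ _) (a2 := pred0)); last first.
      move=> t /=; apply/negP => /andP[/eqP -> /eqP E].
      by move: (a_neq z); rewrite E eqxx.
    rewrite count_pred0 addn0 => ->.
    rewrite !count_uniq_mem ?uT //.
    move: zC; rewrite inE.
    case: (boolP (z \in Tw x k)) => [/memT [i li ->]|_] /=.
      case: (boolP (alpha _ \in Tw x k)) => [/memT [j lj E]|] //.
      by move: (NA2 i.+1 j.+1 x); rewrite E eqxx.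
    by move=> ->.
Qed.

End Cyc.
Lemma main : nontrivial_shadow D ->
  exists C1 C2 : {set D},
    [/\ C1 != C2, straight_ahead_cycle alpha sigma C1
      & straight_ahead_cycle alpha sigma C2].
Proof.
move=> /card_gt0P [x0 _].
have finj := f_inj.
have [y [fy yx sy]] : exists y, [/\ fconnect f x0 y, y != x0 & sv y x0].
  case: (two_orbits x0 (sigma x0)) => [H|H].
    exists (sigma x0); split => //; first exact: s1_neq.
    by rewrite svC; apply: fconnect1.
  case: (two_orbits x0 (sigma (sigma (sigma x0)))) => [H3|H3].
    exists (sigma (sigma (sigma x0))); split => //; first exact: s3_neq.
    by rewrite svC; apply: (fconnect_iter _ 3).
  exfalso; apply: (@NA (alpha x0) (f (sigma x0))).
    by apply: connect_trans H (fconnect1 _ _).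
  by rewrite afE.
set m := fingraph.order f x0.
set k0 := findex f x0 y.
have km : k0 < m by apply: findex_max.
have ey : iter k0 f x0 = y by apply: iter_findex.
have kpos : 0 < k0.
  by move: yx; rewrite -ey lt0n; apply: contra => /eqP ->.
have clA : closedw x0 k0 by rewrite /closedw ey.
set xB := iter k0 f x0.
have clB : closedw xB (m - k0).
  by rewrite /closedw /xB -iterD subnK ?(ltnW km) // iter_order // svC ey.
have [a1 [k1 [h11 h12 h13 h14]]] := seg kpos clA.
have mk0 : 0 < m - k0 by rewrite subn_gt0.
have [a2 [k2 [h21 h22 h23 h24]]] := seg mk0 clB.
exists (Cw (iter a1 f x0) k1), (Cw (iter a2 f xB) k2); split.
- apply/negP => /eqP E.
  have := memC1 (iter a1 f x0) h12; rewrite E inE => /orP[/memT [i li Ei]|/memT [i li Ei]].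
    move: Ei; rewrite /xB -!iterD => Ei.
    have lt1 : 1 + a1 < m by lia.
    have := findex_iter lt1; rewrite Ei.
    case: (ltngtP (i.+1 + a2 + k0) m) => [lt2|gt2|eq2].
      by rewrite findex_iter //; lia.
      by lia.
    by rewrite eq2 iter_order // findex0.
  move: Ei; rewrite /xB -!iterD => Ei.
  by move: (NA2 (1 + a1) (i.+1 + a2 + k0) x0); rewrite Ei eqxx.
- exact: cycle_ok.
- exact: cycle_ok.
Qed.

End Proof.

Theorem fact3p2 (D : finType) (alpha sigma : {perm D}) :
  is_shadow alpha sigma -> nontrivial_shadow D ->
  exists C1 C2 : {set D},
    [/\ C1 != C2, straight_ahead_cycle alpha sigma C1
      & straight_ahead_cycle alpha sigma C2].
Proof. by move=> Hs; apply: main. Qed.
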